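(* Let $n\ge2$, $1<p<\infty$, $R>0$, $\bar\beta>0$ a constant, and let $\rho$ and $f$ be as in the context. Then the function $$g(z)=f(z^{1/n})\,z^{1-\frac1n},\qquad 0\le z\le R^n,$$ is convex on $[0,R^n]$.
   Context: $F:\mathbb R^n\to[0,\infty)$ is convex, even, positively 1-homogeneous, with $a|\xi|\le F(\xi)\le b|\xi|$ ($0<a\le b$), $F\in C^2(\mathbb R^n\setminus\{0\})$, Hessian of $F^p$ positive definite off the origin; $F^o(v)=\sup_{\xi\ne0}\langle\xi,v\rangle/F(\xi)$ and $\mathcal W_R=\{x:F^o(x)<R\}$. $\ell_1(\bar\beta,\mathcal W_R)=\inf_{v\in W^{1,p}(\mathcal W_R),v\not\equiv0}\frac{\int_{\mathcal W_R}F^p(\nabla v)dx+\bar\beta\int_{\partial\mathcal W_R}|v|^pF(\nu)d\mathcal H^{n-1}}{\int_{\mathcal W_R}|v|^pdx}$ ($\nu$ the Euclidean outer normal). It is known that the positive first eigenfunction on $\mathcal W_R$ has the form $v(x)=\rho(F^o(x))$, where $\rho\in C^\infty(]0,R[)\cap C^1([0,R])$ is positive, decreasing, and solves $-(p-1)(-\rho'(r))^{p-2}\rho''(r)+\frac{n-1}{r}(-\rho'(r))^{p-1}=\ell_1(\bar\beta,\mathcal W_R)\rho(r)^{p-1}$ for $r\in]0,R[$, $\rho'(0)=0$, $-(-\rho'(R))^{p-1}+\bar\beta\rho(R)^{p-1}=0$. Define $f(r)=\dfrac{(-\rho'(r))^{p-1}}{\rho(r)^{p-1}}$ for $r\in[0,R]$.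 *)

(* Defs.v *)
From mathcomp Require Import all_boot all_order all_algebra.
From mathcomp Require Import all_classical all_reals all_analysis.
Set Implicit Arguments. Unset Strict Implicit. Unset Printing Implicit Defensive.
Import Order.TTheory GRing.Theory Num.Theory.
Import numFieldNormedType.Exports.
Local Open Scope classical_set_scope.
Local Open Scope ring_scope.

Definition is_rel_derive {R : realType} (a b : R) (f : R -> R) (x d : R) : Prop :=
  (fun h : R => h^-1 * (f (x + h) - f x))
    @ within [set h : R | h != 0 /\ a <= x + h <= b] (nbhs (0 : R)) --> d.

Definition C1_closed_with {R : realType} (a b : R) (f df : R -> R) : Prop :=
  {within `[a, b], continuous df} /\
  (forall x, a <= x <= b -> is_rel_derive a b f x (df x)).

Definition Cinf_open {R : realType} (a b : R) (f : R -> R) : Prop :=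
  forall (k : nat) (x : R), a < x < b -> derivable (derive1n k f) x 1.

Definition fratio {R : realType} (p : R) (rho drho : R -> R) (r : R) : R :=
  (- drho r) `^ (p - 1) / (rho r) `^ (p - 1).

Definition gfun {R : realType} (n : nat) (f : R -> R) (z : R) : R :=
  f (z `^ (n%:R)^-1) * z `^ (1 - (n%:R)^-1).

Definition convex_on_itv {R : realType} (a b : R) (g : R -> R) : Prop :=
  forall x y t : R, a <= x <= b -> a <= y <= b -> 0 <= t <= 1 ->
    g (t * x + (1 - t) * y) <= t * g x + (1 - t) * g y.

(* Main.v *)
Require Import Defs.
From mathcomp Require Import all_boot all_order all_algebra.
From mathcomp Require Import all_classical all_reals all_analysis.
From mathcomp Require Import ring lra.
Import Order.TTheory GRing.Theory Num.Theory.
Import numFieldNormedType.Exports.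
Local Open Scope classical_set_scope.
Local Open Scope ring_scope.
Set Implicit Arguments. Unset Strict Implicit.

Lemma cvg_withinP (R : realType) (A : set R) (f : R -> R) x l :
  f @ within A (nbhs x) --> l <-> forall e, 0 < e ->
    exists2 d, 0 < d & forall t, A t -> `|x - t| < d -> `|l - f t| < e.
Proof.
rewrite cvgrPdist_lt; split => H e e0.
- have := H e e0; rewrite /within /= => /nbhs_ballP [d /= d0 hd].
  exists d => // t At xt; apply: hd => //.
- have [d d0 hd] := H e e0.
  rewrite /within /=; apply/nbhs_ballP; exists d => //= t.
  move=> xt At; apply: hd => //.
Qed.

Record hyp (R : realType) (m : nat) (p Rad beta lam : R) (rho u : R -> R) : Prop := Hyp {
  h_p : 1 < p; h_R : 0 < Rad; h_b : 0 < beta;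
  h_inf : Cinf_open 0 Rad rho;
  h_cu : {within `[0, Rad], continuous u};
  h_rd : forall x, 0 <= x <= Rad -> is_rel_derive 0 Rad rho x (u x);
  h_pos : forall r, 0 <= r <= Rad -> 0 < rho r;
  h_dec : forall r s, 0 <= r <= Rad -> 0 <= s <= Rad -> r <= s -> rho s <= rho r;
  h_ode : forall r, 0 < r < Rad -> - (p - 1) * (- u r) `^ (p - 2) * derive1 u r
     + (m.+1)%:R / r * (- u r) `^ (p - 1) = lam * (rho r) `^ (p - 1);
  h_u0 : u 0 = 0;
  h_bd : - (- u Rad) `^ (p - 1) + beta * (rho Rad) `^ (p - 1) = 0 }.
Lemma cvg_powR (R : realType) (T : Type) (F : set_system T) (FF : Filter F)
  (g : T -> R) (g0 a : R) :
  0 < a -> 0 <= g0 -> (\forall t \near F, 0 <= g t) -> g @ F --> g0 ->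
  (fun t => g t `^ a) @ F --> g0 `^ a.
Proof.
move=> a0 g00 gF gc.
have [g0p|g0z] : 0 < g0 \/ g0 = 0.
  by move: g00; rewrite le_eqVlt => /orP [/eqP ->|->]; [right|left].
- have hc : {for g0, continuous (fun y : R => y `^ a)}.
    apply: differentiable_continuous; apply/derivable1_diffP.
    by apply: derivable_powR; rewrite in_itv /= andbT.
  exact: (continuous_cvg FF hc gc).
- subst g0; rewrite powR0 ?gt_eqF //.
  apply/cvgrPdist_lt => e e0.
  have ea : 0 < e `^ a^-1 by rewrite powR_gt0.
  have := (cvgrPdist_lt _ _).1 gc _ ea.
  move=> /(_ FF) gcl.
  near=> t.
  have gt0 : 0 <= g t by near: t.
  have gt : `|0 - g t| < e `^ a^-1 by near: t.
  rewrite sub0r normrN ger0_norm ?powR_ge0 //.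
  move: gt; rewrite sub0r normrN ger0_norm // => gt.
  have := gt0_ltr_powR a0 _ _ gt; rewrite -powRrM mulVf ?gt_eqF // powRr1 ?ltW //.
  apply; rewrite ?nnegrE // ltW //.
Unshelve. all: by end_near.
Qed.
Lemma u_le0 R m p Rad beta lam rho u : @hyp R m p Rad beta lam rho u ->
  forall x, 0 <= x <= Rad -> u x <= 0.
Proof.
move=> H x hx; rewrite leNgt; apply/negP => ux.
have := h_rd H hx; rewrite /is_rel_derive => /cvg_withinP /(_ (u x / 2)).
case; first by rewrite divr_gt0.
move=> d d0 hd.
have hR := h_R H.
have [x0 x1] := andP hx.
have [xR|xR] := ltP x Rad.
- pose h := Num.min (d / 2) (Rad - x).
  have h1 : h <= d / 2 by rewrite ge_min lexx.
  have h2 : h <= Rad - x by rewrite ge_min lexx orbT.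
  have h3 : 0 < h by rewrite lt_min divr_gt0 //= subr_gt0.
  have := hd h; rewrite /=.
  have hQ : h^-1 * (rho (x + h) - rho x) <= 0.
    apply: mulr_ge0_le0; first by rewrite invr_ge0 ltW. rewrite subr_le0.
    by apply: (h_dec H) => //; rewrite ?(ltW h3) ?andbT; [lra | lra].
  move=> /(_ _ _)/ltr_normlP [].
  + split; first by rewrite gt_eqF.
    by apply/andP; split; lra.
  + rewrite sub0r normrN gtr0_norm //; lra.
  + move=> ha hb; lra.
- have xE : x = Rad by apply/eqP; rewrite eq_le x1 xR.
  pose h := Num.min (d / 2) Rad.
  have h1 : h <= d / 2 by rewrite ge_min lexx.
  have h2 : h <= Rad by rewrite ge_min lexx orbT.
  have h3 : 0 < h by rewrite lt_min divr_gt0 //=.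
  have := hd (- h); rewrite /=.
  have hQ : (- h)^-1 * (rho (x + - h) - rho x) <= 0.
    apply: mulr_le0_ge0; first by rewrite invr_le0 oppr_le0 ltW. rewrite subr_ge0.
    by apply: (h_dec H) => //; rewrite ?xE; [apply/andP; split; lra | lra].
  move=> /(_ _ _)/ltr_normlP [].
  + split; first by rewrite oppr_eq0 gt_eqF.
    by apply/andP; split; lra.
  + rewrite sub0r opprK gtr0_norm //; lra.
  + move=> ha hb; lra.
Qed.

Lemma rho_cont R m p Rad beta lam rho u : @hyp R m p Rad beta lam rho u ->
  forall x, 0 <= x <= Rad -> rho @ within [set` `[0, Rad]] (nbhs x) --> rho x.
Proof.
move=> H x hx; apply/cvg_withinP => e e0.
have := h_rd H hx; rewrite /is_rel_derive => /cvg_withinP /(_ 1 ltr01) [d1 d10 hd1].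
pose K := `|u x| + 1.
have K0 : 0 < K by rewrite /K ltr_pwDr.
exists (Num.min d1 (e / K)); first by rewrite lt_min d10 divr_gt0.
move=> t; rewrite /= in_itv /= => ht.
rewrite lt_min => /andP [td1 teK].
have [->|txn] := eqVneq t x; first by rewrite subrr normr0.
have e2 : x + (t - x) = t by ring.
have ht' : 0 <= x + (t - x) <= Rad by rewrite e2.
have hh : (t - x) != 0 by rewrite subr_eq0.
have := hd1 (t - x); rewrite /= sub0r normrN distrC.
move=> /(_ (conj hh ht') td1); rewrite e2.
set Q := (t - x)^-1 * _ => hQ.
have hQK : `|Q| < K.
  have : `|Q| <= `|u x - Q| + `|u x|.
    rewrite {1}(_ : Q = - (u x - Q) + u x); last by ring.
    by rewrite (le_trans (ler_normD _ _)) // normrN.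
  rewrite /K; lra.
have eq1 : rho x - rho t = (x - t) * Q.
  by rewrite /Q; field.
rewrite eq1 normrM.
have a0 := normr_ge0 (x - t).
have b0 := normr_ge0 Q.
have cK : e / K * K = e by rewrite divfK // gt_eqF.
move: teK hQK cK a0 b0; set a := `|x - t|; set b := `|Q|; set c := e / K.
move=> *; nra.
Qed.

Lemma rho_derive R m p Rad beta lam rho u : @hyp R m p Rad beta lam rho u ->
  forall x, 0 < x < Rad -> is_derive x 1 rho (u x).
Proof.
move=> H x /andP [x0 xR].
have HQ : (fun h : R => h^-1 *: ((rho \o shift x) (h *: 1) - rho x)) @ 0^' --> u x.
  apply/cvg_withinP => e e0.
  have hx : 0 <= x <= Rad by rewrite !ltW.
  have := h_rd H hx.
  rewrite /is_rel_derive => /cvg_withinP /(_ e e0) [d d0 hd].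
  exists (Num.min d (Num.min x (Rad - x))).
    by rewrite !lt_min d0 x0 subr_gt0 xR.
  move=> h /= hn; rewrite !lt_min sub0r normrN => /and3P [hd1 hx1 hR1].
  rewrite [h%:A]mulr1 (addrC h x); apply: hd; rewrite ?sub0r ?normrN //; split => //.
  have hl : - `|h| <= h by rewrite lerNl -normrN ler_norm.
  have hr := ler_norm h.
  apply/andP; split; lra.
apply: DeriveDef; first by apply/cvg_ex; exists (u x).
by rewrite /derive; apply: cvg_lim.
Qed.

Lemma u_derivable R m p Rad beta lam rho u : @hyp R m p Rad beta lam rho u ->
  forall x, 0 < x < Rad -> derivable u x 1.
Proof.
move=> H x hx.
have hinf := h_inf H; have := hinf 1 x hx.
apply: near_eq_derivable.
have : \forall z \near x, z \in `]0, Rad[ by apply: near_in_itvoo; rewrite in_itv.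
apply: filterS => z; rewrite in_itv /= => hz.
by rewrite derive1E; case: (rho_derive H hz).
Qed.

Lemma u_is_derive R m p Rad beta lam rho u : @hyp R m p Rad beta lam rho u ->
  forall x, 0 < x < Rad -> is_derive x 1 u (derive1 u x).
Proof.
by move=> H x hx; rewrite derive1E; apply: derivableP; apply: u_derivable H x hx.
Qed.

Lemma pm1_neq0 (R : realType) (p : R) : 1 < p -> p - 1 != 0.
Proof. by move=> hp; rewrite subr_eq0 gt_eqF. Qed.

Lemma uR_lt0 R m p Rad beta lam rho u : @hyp R m p Rad beta lam rho u ->
  u Rad < 0.
Proof.
move=> H; have hR := h_R H.
rewrite lt_neqAle (u_le0 H) ?andbT; last by rewrite lexx ltW.
apply/eqP => h0; have := h_bd H.
rewrite h0 oppr0 powR0 ?pm1_neq0 ?(h_p H) // oppr0 add0r.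
apply/eqP; rewrite mulf_neq0 // ?gt_eqF ?(h_b H) // powR_gt0 //.
by apply: (h_pos H); rewrite lexx ltW.
Qed.

Lemma up_pos R m p Rad beta lam rho u : @hyp R m p Rad beta lam rho u ->
  forall x, 0 < x < Rad -> u x < 0 -> lam <= 0 -> 0 < derive1 u x.
Proof.
move=> H x hx ux hl.
have E := h_ode H hx.
have hp := h_p H.
have P2 : 0 < (- u x) `^ (p - 2) by rewrite powR_gt0 // oppr_gt0.
have A : 0 < (- u x) `^ (p - 1) by rewrite powR_gt0 // oppr_gt0.
have B : 0 < (rho x) `^ (p - 1).
  by rewrite powR_gt0 // (h_pos H) // !ltW //; case/andP: hx.
have C : 0 < (m.+1)%:R / x by rewrite divr_gt0 //; case/andP: hx.
have CA : 0 < (m.+1)%:R / x * (- u x) `^ (p - 1) by rewrite mulr_gt0.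
have LB : lam * (rho x) `^ (p - 1) <= 0 by rewrite mulr_le0_ge0 // ltW.
rewrite ltNge; apply/negP => hd.
have K : 0 <= (p - 1) * (- u x) `^ (p - 2) by rewrite mulr_ge0 // ltW // subr_gt0.
have := mulr_ge0_le0 K hd.
move: CA LB; set a := (m.+1)%:R / x * _; set b := lam * _; set k := (p - 1) * _.
move=> CA LB KD.
have E2 : - (k * derive1 u x) + a = b by rewrite /k /a /b -E; ring.
lra.
Qed.

Lemma wcont_pt (R : realType) (a b : R) (f : R -> R) :
  {within `[a, b], continuous f} ->
  forall x, a <= x <= b -> f @ within [set` `[a, b]] (nbhs x) --> f x.
Proof. by move=> /subspace_continuousP H x hx; apply: H; rewrite /= in_itv. Qed.

Lemma pt_wcont (R : realType) (a b : R) (f : R -> R) :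
  (forall x, a <= x <= b -> f @ within [set` `[a, b]] (nbhs x) --> f x) ->
  {within `[a, b], continuous f}.
Proof. by move=> H; apply/subspace_continuousP => x; rewrite /= in_itv; exact: H. Qed.

Lemma lam_gt0 R m p Rad beta lam rho u : @hyp R m p Rad beta lam rho u ->
  0 < lam.
Proof.
move=> H; have hR := h_R H.
rewrite ltNge; apply/negP => hl.
have [c hc cmin] := EVT_min (ltW hR) (h_cu H).
have uRl := uR_lt0 H.
have uc : u c < 0.
  by apply: le_lt_trans uRl; apply: cmin; rewrite in_itv /= lexx ltW.
move: hc; rewrite in_itv /= => hc; have [c0' cR] := andP hc.
have c0 : 0 < c.
  by rewrite lt_neqAle c0' andbT; apply/eqP => c0; move: uc; rewrite -c0 (h_u0 H) ltxx.
have := wcont_pt (h_cu H) hc; move=> /cvg_withinP /(_ (- u c / 2)) [].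
  by rewrite divr_gt0 // oppr_gt0.
move=> d d0 hd.
pose del := Num.min (d / 2) (c / 2).
have dl1 : del <= d / 2 by rewrite ge_min lexx.
have dl2 : del <= c / 2 by rewrite ge_min lexx orbT.
have dl3 : 0 < del by rewrite lt_min !divr_gt0.
have ac : c - del < c by lra.
have hder : forall y, y \in `]c - del, c[ -> is_derive y 1 u (derive1 u y).
  move=> y; rewrite in_itv /= => /andP [y1 y2]; apply: (u_is_derive H).
  by apply/andP; split; lra.
have hcont : {within `[c - del, c], continuous u}.
  apply: continuous_subspaceW (h_cu H) => y; rewrite /= !in_itv /=.
  by move=> /andP [y1 y2]; apply/andP; split; lra.
have [xi hxi E] := MVT ac hder hcont.
move: hxi; rewrite in_itv /= => /andP [xi1 xi2].
have uxi : u xi < 0.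
  have := hd xi; rewrite /= in_itv /=.
  have -> : 0 <= xi <= Rad by apply/andP; split; lra.
  have xd : `|c - xi| < d by rewrite gtr0_norm; lra.
  move=> /(_ isT xd) /ltr_normlP [h1 h2]; lra.
have hxi : 0 < xi < Rad by apply/andP; split; lra.
have dpos := up_pos H hxi uxi hl.
have := cmin (c - del); rewrite in_itv /=.
have -> : 0 <= c - del <= Rad by apply/andP; split; lra.
move=> /(_ isT) cm.
have : 0 < derive1 u xi * (c - (c - del)) by rewrite mulr_gt0 // subr_gt0.
lra.
Qed.

Lemma u_lt0 R m p Rad beta lam rho u : @hyp R m p Rad beta lam rho u ->
  forall x, 0 < x < Rad -> u x < 0.
Proof.
move=> H x hx; have hR := h_R H.
have [x0 xR] := andP hx.
rewrite lt_neqAle (u_le0 H) ?andbT; last by rewrite !ltW.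
apply/eqP => h0.
have hd : is_derive x 1 u 0.
  apply: (@derive1_at_max _ u 0 Rad x (ltW hR)).
  - by move=> t; rewrite in_itv /= => ht; apply: (u_derivable H).
  - by rewrite in_itv /=.
  - move=> t; rewrite in_itv /= h0 => /andP [t0 tR]; apply: (u_le0 H).
    by rewrite !ltW.
have hd0 : 'D_1 u x = 0 by case: hd.
have := h_ode H hx.
rewrite derive1E hd0 h0 oppr0 mulr0 powR0 ?pm1_neq0 ?(h_p H) //.
rewrite mulr0 add0r => /esym /eqP.
rewrite mulf_eq0 gt_eqF ?(lam_gt0 H) //= gt_eqF // powR_gt0 //.
by apply: (h_pos H); rewrite !ltW.
Qed.

Lemma f_cont R m p Rad beta lam rho u : @hyp R m p Rad beta lam rho u ->
  forall x, 0 <= x <= Rad ->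
  fratio p rho u @ within [set` `[0, Rad]] (nbhs x) --> fratio p rho u x.
Proof.
move=> H x hx.
have hp := h_p H.
have hu := wcont_pt (h_cu H) hx.
have hA : (fun t => (- u t) `^ (p - 1)) @ within [set` `[0, Rad]] (nbhs x)
    --> (- u x) `^ (p - 1).
  apply: cvg_powR; first by rewrite subr_gt0.
  - by rewrite oppr_ge0 (u_le0 H).
  - apply: filterS (withinT [set` `[0, Rad]] _) => t; rewrite /= in_itv => ht.
    by rewrite oppr_ge0 (u_le0 H).
  - exact: cvgN hu.
have hB : (fun t => (rho t) `^ (p - 1)) @ within [set` `[0, Rad]] (nbhs x)
    --> (rho x) `^ (p - 1).
  apply: cvg_powR; first by rewrite subr_gt0.
  - by rewrite ltW // (h_pos H).
  - apply: filterS (withinT [set` `[0, Rad]] _) => t; rewrite /= in_itv => ht.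
    by rewrite ltW // (h_pos H).
  - exact: rho_cont H x hx.
have B0 : (rho x) `^ (p - 1) != 0 by rewrite gt_eqF // powR_gt0 // (h_pos H).
exact: cvgM hA (cvgV B0 hB).
Qed.

Definition qf (R : realType) (rho u : R -> R) r := - u r / rho r.
Definition Hf (R : realType) (p lam : R) (rho u : R -> R) r :=
  lam + (p - 1) * (qf rho u r * fratio p rho u r).

Lemma f_derive R m p Rad beta lam rho u : @hyp R m p Rad beta lam rho u ->
  forall x, 0 < x < Rad -> is_derive x 1 (fratio p rho u)
    (Hf p lam rho u x - (m.+1)%:R / x * fratio p rho u x).
Proof.
move=> H x hx.
have hp := h_p H.
have [x0 xR] := andP hx.
have ux := u_lt0 H hx.
have rx : 0 < rho x by apply: (h_pos H); rewrite !ltW.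
have dA : is_derive x 1 (fun t => (- u t) `^ (p - 1))
   ((p - 1) * (- u x) `^ (p - 1 - 1) * (- derive1 u x)).
  have ux2 : 0 < - u x by rewrite oppr_gt0.
  have h1 := is_derive1_powR (p - 1) ux2.
  have h2 : is_derive x 1 (fun t => - u t) (- derive1 u x).
    exact: is_deriveN (u_is_derive H hx).
  exact: (@is_derive1_comp R (fun y => y `^ (p - 1)) (fun t => - u t) x _ _ h1 h2).
have dB : is_derive x 1 (fun t => (rho t) `^ (p - 1))
   ((p - 1) * (rho x) `^ (p - 1 - 1) * u x).
  have h1 := is_derive1_powR (p - 1) rx.
  exact: (@is_derive1_comp R (fun y => y `^ (p - 1)) rho x _ _ h1 (rho_derive H hx)).
have B0 : (rho x) `^ (p - 1) != 0 by rewrite gt_eqF // powR_gt0.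
have dV := @is_deriveV R (fun t => rho t `^ (p - 1)) x _ 1 B0 dB.
have dM := is_deriveM dA dV.
rewrite {1}(_ : fratio p rho u = (fun t => (- u t) `^ (p - 1)) * (fun t => ((rho t) `^ (p - 1))^-1)); last first.
  by apply/funext => t.
apply: is_derive_eq dM _.
have ode := h_ode H hx.
rewrite (_ : p - 2 = p - 1 - 1) in ode; last by ring.
move: ode.
rewrite /Hf /qf /fratio /=.
have ux2 : 0 < - u x by rewrite oppr_gt0.
have PBp : 0 < rho x `^ (p - 1 - 1) by rewrite powR_gt0.
have P2p : 0 < (- u x) `^ (p - 1 - 1) by rewrite powR_gt0.
have EB : rho x `^ (p - 1) = rho x * rho x `^ (p - 1 - 1).
  by rewrite mulr_powRB1 ?ltW // subr_gt0.
set a := (- u x) `^ (p - 1).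
set P2 := (- u x) `^ (p - 1 - 1).
set PB := rho x `^ (p - 1 - 1).
set d := derive1 u x.
rewrite EB => ode.
have pm : p - 1 != 0 by rewrite pm1_neq0.
have ed : d = ((m.+1)%:R / x * a - lam * (rho x * PB)) / ((p - 1) * P2).
  rewrite -ode; field.
  by rewrite pm !gt_eqF.
rewrite ed.
rewrite /GRing.scale /= -/PB.
field.
by rewrite pm !gt_eqF.
Qed.


Definition Gf (R : realType) (m : nat) (p : R) (rho u : R -> R) r :=
  r ^+ m.+1 * fratio p rho u r.

Lemma G_derive R m p Rad beta lam rho u : @hyp R m p Rad beta lam rho u ->
  forall x, 0 < x < Rad ->
  is_derive x 1 (Gf m p rho u) (x ^+ m.+1 * Hf p lam rho u x).
Proof.
move=> H x hx; have [x0 xR] := andP hx.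
have dX := is_deriveX m.+1 (is_derive_id x 1).
have dM := is_deriveM dX (f_derive H hx).
rewrite {1}(_ : Gf m p rho u = (id ^+ m.+1) * fratio p rho u); last first.
  by apply/funext => t; rewrite /Gf /= exprfctE.
apply: is_derive_eq dM _.
rewrite /GRing.scale /= exprfctE /= exprS.
field; by rewrite gt_eqF.
Qed.

Lemma G_cont R m p Rad beta lam rho u : @hyp R m p Rad beta lam rho u ->
  {within `[0, Rad], continuous (Gf m p rho u)}.
Proof.
move=> H; apply: pt_wcont => x hx.
have h1 : (fun r : R => r) @ within [set` `[0, Rad]] (nbhs x) --> x.
  exact: cvg_within.
have h2 := @continuous_cvg _ _ _ _ _ _ _ _ (@exprn_continuous R m.+1 x) h1.
have h3 := cvgM (h2 (within_filter _ _)) (f_cont H hx).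
exact: h3.
Qed.

Lemma f_ge0 (R : realType) (p : R) rho u r : 0 <= fratio p rho u r.
Proof. by rewrite /fratio divr_ge0 // powR_ge0. Qed.

Lemma f_zero R m p Rad beta lam rho u : @hyp R m p Rad beta lam rho u ->
  fratio p rho u 0 = 0.
Proof.
move=> H; rewrite /fratio (h_u0 H) oppr0 powR0 ?mul0r //.
exact: pm1_neq0 (h_p H).
Qed.

Lemma f_q R m p Rad beta lam rho u : @hyp R m p Rad beta lam rho u ->
  forall r, 0 <= r <= Rad -> fratio p rho u r = (qf rho u r) `^ (p - 1).
Proof.
move=> H r hr; have rp := h_pos H hr.
have ur := u_le0 H hr.
rewrite /fratio /qf.
have -> : - u r = (- u r / rho r) * rho r by rewrite divfK // gt_eqF.
rewrite powRM ?mulfK // ?gt_eqF ?powR_gt0 // ?divr_ge0 ?oppr_ge0 // ltW //.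
Qed.

Lemma q_ge0 R m p Rad beta lam rho u : @hyp R m p Rad beta lam rho u ->
  forall r, 0 <= r <= Rad -> 0 <= qf rho u r.
Proof.
move=> H r hr; rewrite /qf divr_ge0 ?oppr_ge0 ?(u_le0 H) //.
by rewrite ltW // (h_pos H).
Qed.

Lemma Hf_mono R m p Rad beta lam rho u : @hyp R m p Rad beta lam rho u ->
  forall s c, 0 <= s <= Rad -> 0 <= c <= Rad ->
  fratio p rho u s <= fratio p rho u c -> Hf p lam rho u s <= Hf p lam rho u c.
Proof.
move=> H s c hs hc hf.
have hp := h_p H.
have qs := q_ge0 H hs; have qc := q_ge0 H hc.
have hq : qf rho u s <= qf rho u c.
  rewrite leNgt; apply/negP => hlt.
  have := gt0_ltr_powR (r := p - 1) _ _ _ hlt.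
  rewrite -(f_q H hs) -(f_q H hc) subr_gt0 ?nnegrE => /(_ hp qc qs).
  by rewrite ltNge hf.
rewrite /Hf lerD2l; apply: ler_wpM2l; first by rewrite subr_ge0 ltW.
by apply: ler_pM => //; apply: f_ge0.
Qed.

Lemma f_mono R m p Rad beta lam rho u : @hyp R m p Rad beta lam rho u ->
  forall s c, 0 < s -> s <= c -> c < Rad -> fratio p rho u s <= fratio p rho u c.
Proof.
move=> H s c s0 sc cR.
have hR := h_R H.
rewrite leNgt; apply/negP => hlt.
have c0 : 0 < c by apply: lt_le_trans sc.
have fcont : {within `[0, c], continuous (fratio p rho u)}.
  apply: continuous_subspaceW (pt_wcont (f_cont H)) => y.
  by rewrite /= !in_itv /= => /andP [y0 yc]; apply/andP; split; lra.
have [k hk kmax] := EVT_max (ltW c0) fcont.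
move: hk; rewrite in_itv /= => /andP [k0 kc].
have fks : fratio p rho u s <= fratio p rho u k.
  by apply: kmax; rewrite in_itv /= sc ltW.
have fc0 := f_ge0 p rho u c.
have fk0 : 0 < fratio p rho u k by lra.
have k0' : 0 < k.
  rewrite lt_neqAle k0 andbT; apply/eqP => k0e.
  by move: fk0; rewrite -k0e (f_zero H) ltxx.
have kc' : k < c.
  rewrite lt_neqAle kc andbT; apply/eqP => kce.
  by move: fks; rewrite kce leNgt hlt.
have hkR : 0 < k < Rad by apply/andP; split; lra.
have dk : is_derive k 1 (fratio p rho u) 0.
  apply: (@derive1_at_max _ _ 0 c k (ltW c0)).
  - move=> t; rewrite in_itv /= => /andP [t0 tc].
    have htR : 0 < t < Rad by apply/andP; split; lra.
    by case: (f_derive H htR).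
  - by rewrite in_itv /= k0'.
  - move=> t; rewrite in_itv /= => /andP [t0 tc]; apply: kmax.
    by rewrite in_itv /= !ltW.
have Ek : Hf p lam rho u k - (m.+1)%:R / k * fratio p rho u k = 0.
  have e1 := @derive_val _ _ _ _ _ _ _ (f_derive H hkR).
  have e2 := @derive_val _ _ _ _ _ _ _ dk.
  by rewrite -e1 e2.
pose Hk := Hf p lam rho u k.
pose psi := fun r : R => Gf m p rho u r - Hk / (m.+2)%:R * r ^+ m.+2.
have m2 : (m.+2)%:R != 0 :> R by rewrite pnatr_eq0.
have dps : forall r, r \in `]0, k[ ->
    is_derive r 1 psi (r ^+ m.+1 * Hf p lam rho u r - Hk * r ^+ m.+1).
  move=> r; rewrite in_itv /= => /andP [r0 rk].
  have hr' : 0 < r < Rad by apply/andP; split; lra.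
  have dd := is_deriveB (G_derive H hr')
    (is_deriveZ (Hk / (m.+2)%:R) (is_deriveX m.+2 (is_derive_id r 1))).
  rewrite (_ : psi = Gf m p rho u - (Hk / (m.+2)%:R) \*: (id ^+ m.+2)); last first.
    by apply/funext => t; rewrite /psi /= exprfctE.
  apply: is_derive_eq dd _.
  rewrite /GRing.scale /=.
  by field.
have pcont : {within `[0, k], continuous psi}.
  have Gk : {within `[0, k], continuous (Gf m p rho u)}.
    apply: continuous_subspaceW (G_cont H) => y.
    by rewrite /= !in_itv /= => /andP [y0 yc]; apply/andP; split; lra.
  apply: pt_wcont => x hx.
  have h1 : (fun r : R => r) @ within [set` `[0, k]] (nbhs x) --> x.
    exact: cvg_within.
  have h2 := @continuous_cvg _ _ _ _ _ _ _ _ (@exprn_continuous R m.+2 x) h1.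
  have h3 := cvgB (wcont_pt Gk hx)
    (cvgM (cvg_cst (Hk / (m.+2)%:R)) (h2 (within_filter _ _))).
  exact: h3.
have [xi hxi E] := MVT k0' dps pcont.
move: hxi; rewrite in_itv /= => /andP [xi0 xik].
have hxiR : 0 <= xi <= Rad by apply/andP; split; lra.
have hkR' : 0 <= k <= Rad by apply/andP; split; lra.
have Hxi : Hf p lam rho u xi <= Hk.
  apply: (Hf_mono H hxiR hkR'); apply: kmax.
  by rewrite in_itv /= ltW // (le_trans (ltW xik)) // ltW.
have psi0 : psi 0 = 0.
  by rewrite /psi /Gf !expr0n /= !mul0r mulr0 subr0.
have dneg : xi ^+ m.+1 * Hf p lam rho u xi - Hk * xi ^+ m.+1 <= 0.
  rewrite [Hk * _]mulrC -mulrBr; apply: mulr_ge0_le0.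
    by rewrite exprn_ge0 // ltW.
  by rewrite subr_le0.
have psik : psi k <= 0.
  have : psi k - psi 0 <= 0 by rewrite E; apply: mulr_le0_ge0 => //; rewrite subr0 ltW.
  by rewrite psi0 subr0.
have : psi k = k ^+ m.+1 * fratio p rho u k / (m.+2)%:R.
  have eHk : Hk = (m.+1)%:R / k * fratio p rho u k.
    by apply/eqP; rewrite -subr_eq0; apply/eqP; exact: Ek.
  rewrite /psi /Gf eHk !exprS; set K := k ^+ m.
  field.
  have hm : 0 <= m%:R :> R := ler0n _ _.
  by rewrite (gt_eqF k0') andbT; apply: lt0r_neq0; lra.
move=> pk; move: psik; rewrite pk.
rewrite leNgt divr_gt0 ?ltr0n // mulr_gt0 // exprn_gt0 //.
Qed.

Definition rz (R : realType) (m : nat) (z : R) := z `^ ((m.+2)%:R)^-1.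

Lemma m2_gt0 (R : realType) (m : nat) : 0 < (m.+2)%:R :> R.
Proof. by rewrite ltr0n. Qed.

Lemma gfun_G (R : realType) m (p : R) (rho u : R -> R) (z : R) : 0 <= z ->
  gfun m.+2 (fratio p rho u) z = Gf m p rho u (rz m z).
Proof.
move=> z0; rewrite /gfun /Gf /rz mulrC; congr (_ * _).
rewrite -powR_mulrn ?powR_ge0 // -powRrM; congr (z `^ _).
have n0 := m2_gt0 R m.
have e : (m.+2)%:R = (m.+1)%:R + 1 :> R by rewrite natr1.
rewrite e in n0 *.
by field; rewrite gt_eqF.
Qed.

Lemma rz_lt (R : realType) m (z1 z2 : R) : 0 <= z1 -> z1 < z2 -> rz m z1 < rz m z2.
Proof.
move=> z0 z12.
have a0 : 0 < ((m.+2)%:R)^-1 :> R by rewrite invr_gt0 m2_gt0.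
have n1 : z1 \is Num.nneg by rewrite nnegrE.
have n2 : z2 \is Num.nneg by rewrite nnegrE ltW // (le_lt_trans z0).
exact: (@gt0_ltr_powR R _ a0 z1 z2 n1 n2 z12).
Qed.

Lemma rz_le (R : realType) m (z1 z2 : R) : 0 <= z1 -> z1 <= z2 -> rz m z1 <= rz m z2.
Proof.
move=> z0 z12.
have a0 : 0 <= ((m.+2)%:R)^-1 :> R by rewrite invr_ge0 ltW // m2_gt0.
have n1 : z1 \is Num.nneg by rewrite nnegrE.
have n2 : z2 \is Num.nneg by rewrite nnegrE (le_trans z0).
exact: (@ge0_ler_powR R _ a0 z1 z2 n1 n2 z12).
Qed.

Lemma rz_pow (R : realType) m (z : R) : 0 <= z -> (rz m z) ^+ m.+2 = z.
Proof.
have n0 : (m.+2)%:R != 0 :> R by rewrite gt_eqF // m2_gt0.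
by move=> z0; rewrite /rz -powR_mulrn ?powR_ge0 // -powRrM mulVf ?powRr1.
Qed.

Lemma rz_Rn (R : realType) m (Rad : R) : 0 <= Rad -> rz m (Rad ^+ m.+2) = Rad.
Proof.
have n0 : (m.+2)%:R != 0 :> R by rewrite gt_eqF // m2_gt0.
by move=> R0; rewrite /rz -powR_mulrn // -powRrM mulfV ?powRr1.
Qed.

Lemma slope R m p Rad beta lam rho u : @hyp R m p Rad beta lam rho u ->
  forall z1 z2, 0 <= z1 -> z1 < z2 -> z2 <= Rad ^+ m.+2 ->
  exists2 xi, rz m z1 < xi < rz m z2 &
    gfun m.+2 (fratio p rho u) z2 - gfun m.+2 (fratio p rho u) z1
    = Hf p lam rho u xi / (m.+2)%:R * (z2 - z1).
Proof.
move=> H z1 z2 z10 z12 z2R.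
have hR := h_R H.
have z20 : 0 <= z2 by rewrite ltW // (le_lt_trans z10).
rewrite !gfun_G //.
have r12 := rz_lt m z10 z12.
have r10 : 0 <= rz m z1 by rewrite /rz powR_ge0.
have r2R : rz m z2 <= Rad by rewrite -(rz_Rn m (ltW hR)) rz_le.
set r1 := rz m z1 in r12 r10 *; set r2 := rz m z2 in r12 r2R *.
set k := (Gf m p rho u r2 - Gf m p rho u r1) / (z2 - z1).
pose phi := fun s : R => Gf m p rho u s - k * s ^+ m.+2.
have dps : forall s, s \in `]r1, r2[ ->
    is_derive s 1 phi (s ^+ m.+1 * Hf p lam rho u s - k * ((m.+2)%:R * s ^+ m.+1)).
  move=> s; rewrite in_itv /= => /andP [s1 s2].
  have hs : 0 < s < Rad by apply/andP; split; lra.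
  have dd := is_deriveB (G_derive H hs)
    (is_deriveZ k (is_deriveX m.+2 (is_derive_id s 1))).
  rewrite (_ : phi = Gf m p rho u - k \*: (id ^+ m.+2)); last first.
    by apply/funext => t; rewrite /phi /= exprfctE.
  apply: is_derive_eq dd _.
  by rewrite /GRing.scale /= mulr1.
have pcont : {within `[r1, r2], continuous phi}.
  have Gk : {within `[r1, r2], continuous (Gf m p rho u)}.
    apply: continuous_subspaceW (G_cont H) => y.
    by rewrite /= !in_itv /= => /andP [y0 yc]; apply/andP; split; lra.
  apply: pt_wcont => x hx.
  have h1 : (fun r : R => r) @ within [set` `[r1, r2]] (nbhs x) --> x.
    exact: cvg_within.
  have h2 := @continuous_cvg _ _ _ _ _ _ _ _ (@exprn_continuous R m.+2 x) h1.
  have h3 := cvgB (wcont_pt Gk hx)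
    (cvgM (cvg_cst k) (h2 (within_filter _ _))).
  exact: h3.
have [xi hxi E] := MVT r12 dps pcont.
exists xi; first by move: hxi; rewrite in_itv.
move: hxi; rewrite in_itv /= => /andP [xi1 xi2].
have z21 : z2 - z1 != 0 by rewrite subr_eq0 gt_eqF.
have E0 : phi r2 - phi r1 = 0.
  have p1 : r1 ^+ m.+2 = z1 by rewrite /r1 rz_pow.
  have p2 : r2 ^+ m.+2 = z2 by rewrite /r2 rz_pow.
  rewrite /phi p1 p2 /k.
  set G1 := Gf m p rho u r1; set G2 := Gf m p rho u r2.
  by field.
have hd : (xi ^+ m.+1 * Hf p lam rho u xi - k * ((m.+2)%:R * xi ^+ m.+1)) * (r2 - r1) = 0.
  by rewrite -E E0.
have hd2 : xi ^+ m.+1 * Hf p lam rho u xi - k * ((m.+2)%:R * xi ^+ m.+1) = 0.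
  by move/eqP: hd; rewrite mulf_eq0 (subr_eq0 r2 r1) (gt_eqF r12) orbF => /eqP.
have xm : xi ^+ m.+1 != 0 by rewrite expf_neq0 // gt_eqF // (le_lt_trans r10 xi1).
have eH : Hf p lam rho u xi = k * (m.+2)%:R.
  have : xi ^+ m.+1 * (Hf p lam rho u xi - k * (m.+2)%:R) = 0 by rewrite -hd2; ring.
  by move/eqP; rewrite mulf_eq0 (negbTE xm) /= subr_eq0 => /eqP.
have -> : Gf m p rho u r2 - Gf m p rho u r1 = k * (z2 - z1) by rewrite /k divfK.
rewrite eH; field.
by rewrite gt_eqF // m2_gt0.
Qed.


Lemma conv_lt R m p Rad beta lam rho u : @hyp R m p Rad beta lam rho u ->
  forall x y t, 0 <= x -> x < y -> y <= Rad ^+ m.+2 -> 0 < t < 1 ->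
  gfun m.+2 (fratio p rho u) (t * x + (1 - t) * y) <=
  t * gfun m.+2 (fratio p rho u) x + (1 - t) * gfun m.+2 (fratio p rho u) y.
Proof.
move=> H x y t x0 xy yR /andP [t0 t1].
have hR := h_R H.
set g := gfun m.+2 (fratio p rho u).
set mid := t * x + (1 - t) * y.
have em1 : mid - x = (1 - t) * (y - x) by rewrite /mid; ring.
have em2 : y - mid = t * (y - x) by rewrite /mid; ring.
have xm : x < mid by rewrite -subr_gt0 em1 mulr_gt0 // subr_gt0.
have my : mid < y by rewrite -subr_gt0 em2 mulr_gt0 // subr_gt0.
have m0 : 0 <= mid by rewrite ltW // (le_lt_trans x0 xm).
have [xi1 h1 E1] := slope H x0 xm (ltW (lt_le_trans my yR)).
have [xi2 h2 E2] := slope H m0 my yR.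
move: h1 h2 => /andP [a1 b1] /andP [a2 b2].
have rx0 : 0 <= rz m x by rewrite /rz powR_ge0.
have ryR : rz m y <= Rad by rewrite -(rz_Rn m (ltW hR)) rz_le // ltW // (le_lt_trans x0 xy).
have xi10 : 0 < xi1 by apply: le_lt_trans a1.
have x12 : xi1 <= xi2 by rewrite ltW // (lt_trans b1 a2).
have xi2R : xi2 < Rad by apply: lt_le_trans ryR.
have fm := f_mono H xi10 x12 xi2R.
have i1 : 0 <= xi1 <= Rad by apply/andP; split; rewrite ltW // (le_lt_trans x12 xi2R).
have i2 : 0 <= xi2 <= Rad by apply/andP; split; rewrite ltW // (lt_le_trans xi10 x12).
have Hm := Hf_mono H i1 i2 fm.
set s1 := Hf p lam rho u xi1 / (m.+2)%:R in E1.
set s2 := Hf p lam rho u xi2 / (m.+2)%:R in E2.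
have s12 : s1 <= s2 by rewrite /s1 /s2 ler_wpM2r // invr_ge0 ltW // m2_gt0.
have gx : g x = g mid - s1 * (mid - x) by rewrite /g -E1; ring.
have gy : g y = g mid + s2 * (y - mid) by rewrite /g -E2; ring.
have key : t * g x + (1 - t) * g y - g mid = t * (1 - t) * (y - x) * (s2 - s1).
  by rewrite gx gy em1 em2; ring.
have : 0 <= t * (1 - t) * (y - x) * (s2 - s1).
  apply: mulr_ge0; last lra; apply: mulr_ge0; last lra; apply: mulr_ge0; lra.
lra.
Qed.

Theorem theorem4p5 (R : realType) (n : nat) (p Rad beta lam : R)
  (rho drho : R -> R) :
  (2 <= n)%N -> 1 < p -> 0 < Rad -> 0 < beta ->
  (* rho in C^infty(]0,R[) cap C^1([0,R]), drho = rho' on [0,R] *)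
  Cinf_open 0 Rad rho ->
  C1_closed_with 0 Rad rho drho ->
  (* rho positive and decreasing on [0,R] *)
  (forall r, 0 <= r <= Rad -> 0 < rho r) ->
  (forall r s, 0 <= r <= Rad -> 0 <= s <= Rad -> r <= s -> rho s <= rho r) ->
  (* the ODE on ]0,R[, with lam = ell_1(beta, W_R) *)
  (forall r, 0 < r < Rad ->
     - (p - 1) * (- drho r) `^ (p - 2) * derive1 drho r
     + (n%:R - 1) / r * (- drho r) `^ (p - 1)
     = lam * (rho r) `^ (p - 1)) ->
  drho 0 = 0 ->
  - (- drho Rad) `^ (p - 1) + beta * (rho Rad) `^ (p - 1) = 0 ->
  convex_on_itv 0 (Rad ^+ n) (gfun n (fratio p rho drho)).
Proof.
move=> hn hp hR hb hinf [hcu hrd] hpos hdec hode hu0 hbd.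
case: n hn hode => [|[|m]] // _ hode.
have hode' : forall r, 0 < r < Rad -> - (p - 1) * (- drho r) `^ (p - 2) * derive1 drho r
     + (m.+1)%:R / r * (- drho r) `^ (p - 1) = lam * (rho r) `^ (p - 1).
  move=> r hr; rewrite -hode //; congr (_ + _ * _); congr (_ / _).
  by rewrite -[(m.+2)%:R]natr1 addrK.
have H : hyp m p Rad beta lam rho drho.
  by constructor.
move=> x y t /andP [x0 xR] /andP [y0 yR] /andP [t0 t1].
set g := gfun m.+2 (fratio p rho drho).
have [->|tn0] := eqVneq t 0.
  by rewrite !mul0r !add0r subr0 !mul1r.
have [->|tn1] := eqVneq t 1.
  by rewrite !mul1r subrr !mul0r !addr0.
have ht : 0 < t < 1.
  apply/andP; split; first by rewrite lt_neqAle eq_sym tn0 t0.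
  by rewrite lt_neqAle tn1 t1.
have [xy|yx|<-] := ltgtP x y.
- by have := conv_lt H x0 xy yR ht.
- have ht' : 0 < 1 - t < 1 by case/andP: ht => ? ?; apply/andP; split; lra.
  have := conv_lt H y0 yx xR ht'.
  rewrite (_ : 1 - (1 - t) = t); last by ring.
  by rewrite addrC [X in _ <= X]addrC.
- have -> : t * x + (1 - t) * x = x by ring.
  have -> : t * g x + (1 - t) * g x = g x by ring.
  by [].
Qed.
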